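(* Let $G=(V,E)$ be a connected simple graph which contains a cycle, and suppose that the shortest cycle in $G$ has even length. Then the path metric $\partial$ on $V$ is not conditionally strictly negative definite.
   Context: The path metric $\partial(x,y)$ is the length of a shortest path between vertices $x,y$. A symmetric real function $K$ on $V\times V$ is conditionally strictly negative definite if for every finitely supported $\lambda\colon V\to\mathbb{C}$, $\lambda\neq0$, with $\sum_v\lambda(v)=0$ one has $\sum_{x,y}\lambda(x)\overline{\lambda(y)}K(x,y)<0$. *)

(* Defs.v *)
From HB Require Import structures.
From mathcomp Require Import all_boot all_order all_algebra.
From mathcomp Require Import complex.
From mathcomp Require Import Rstruct.
Set Implicit Arguments. Unset Strict Implicit. Unset Printing Implicit Defensive.
Import Order.TTheory GRing.Theory Num.Theory.
Local Open Scope ring_scope.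

Notation CC := (complex Rdefinitions.R).

Definition simple_graph (V : eqType) (adj : rel V) : Prop :=
  symmetric adj /\ irreflexive adj.

(* a walk from x to y of length n: x :: p with path adj x p, last = y *)
Definition walk (V : eqType) (adj : rel V) (x y : V) (p : seq V) : Prop :=
  path adj x p /\ last x p = y.

Definition connected_graph (V : eqType) (adj : rel V) : Prop :=
  forall x y : V, exists p, walk adj x y p.

Definition is_graph_cycle (V : eqType) (adj : rel V) (c : seq V) : Prop :=
  [/\ (3 <= size c)%N, uniq c & cycle adj c].

Definition is_path_metric (V : eqType) (adj : rel V) (d : V -> V -> nat) : Prop :=
  forall x y : V,
    (exists p, walk adj x y p /\ size p = d x y) /\
    (forall p, walk adj x y p -> (d x y <= size p)%N).

Definition cond_strict_neg_def (V : eqType) (K : V -> V -> CC) : Prop :=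
  forall (S : seq V) (lam : V -> CC),
    uniq S ->
    (forall v, v \notin S -> lam v = 0) ->
    (exists v, lam v != 0) ->
    \sum_(v <- S) lam v = 0 ->
    \sum_(x <- S) \sum_(y <- S) lam x * (lam y)^* * K x y < 0.

(* Main.v *)
Require Import Defs.
From HB Require Import structures.
From mathcomp Require Import all_boot all_order all_algebra.
From mathcomp Require Import complex Rstruct zify ring.
From Stdlib Require Import Classical.
Import Order.TTheory GRing.Theory Num.Theory.
Set Implicit Arguments. Unset Strict Implicit. Unset Printing Implicit Defensive.
Definition fwalk (V : eqType) (adj : rel V) (f : nat -> V) (L : nat) :=
  forall i, i < L -> adj (f i) (f i.+1).

Lemma dle (V : eqType) (adj : rel V) d (Hd : is_path_metric adj d)
  (f : nat -> V) L : fwalk adj f L -> d (f 0) (f L) <= L.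
Proof.
move=> Hf; have := (Hd (f 0) (f L)).2 (mkseq (fun i => f i.+1) L).
rewrite size_mkseq; apply.
have E : forall i, i <= L -> nth (f 0) (f 0 :: mkseq (fun i => f i.+1) L) i = f i.
  by case=> [|i] //= iL; rewrite nth_mkseq.
split.
- apply/(pathP (f 0)) => i; rewrite size_mkseq => iL.
  rewrite E ?(ltnW iL) // nth_mkseq //; exact: Hf.
- by rewrite (last_nth (f 0)) size_mkseq E.
Qed.

Lemma dex (V : eqType) (adj : rel V) d (Hd : is_path_metric adj d) x y :
  exists f, [/\ f 0 = x, f (d x y) = y & fwalk adj f (d x y)].
Proof.
have [[p [[Hp Hl] Hs]] _] := Hd x y.
exists (fun i => nth x (x :: p) i); split => //.
- by rewrite -Hs -last_nth.
- move=> i; rewrite -Hs => ip; exact: (pathP x Hp).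
Qed.

Lemma dsym_le (V : eqType) (adj : rel V) d (Hd : is_path_metric adj d)
  (Hs : symmetric adj) x y : d x y <= d y x.
Proof.
have [f [f0 fL fw]] := dex Hd y x.
have := @dle _ _ _ Hd (fun i => f (d y x - i)) (d y x).
rewrite subn0 subnn f0 fL; apply => i iL.
rewrite Hs -(subnSK iL); apply: fw.
by rewrite (subnSK iL) leq_subr.
Qed.

Lemma dsym (V : eqType) (adj : rel V) d (Hd : is_path_metric adj d)
  (Hs : symmetric adj) x y : d x y = d y x.
Proof. by apply/eqP; rewrite eqn_leq !(dsym_le Hd Hs). Qed.

Lemma dxx (V : eqType) (adj : rel V) d (Hd : is_path_metric adj d) x : d x x = 0.
Proof.
by apply/eqP; rewrite -leqn0; apply: (@dle _ _ _ Hd (fun _ => x) 0) => i.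
Qed.
Lemma extract (V : eqType) (adj : rel V) (w : nat -> V) :
  irreflexive adj -> forall D i, 3 <= D ->
  (forall j, i <= j -> j < i + D -> adj (w j) (w j.+1)) ->
  w (i + D) = w i ->
  (forall j, i <= j -> j.+2 < i + D -> w j.+2 != w j) ->
  exists c, is_graph_cycle adj c /\ size c <= D.
Proof.
move=> Hirr; elim/ltn_ind => D IH i D3 Hadj Hcl Hnb.
case: (classic (exists i' D', [/\ 0 < D', i <= i', i' + D' < i + D
                                   & w i' = w (i' + D')])).
  move=> [i' [D' [D'0 ii' iD' Hw]]].
  have D'D : D' < D.
    by rewrite -(ltn_add2l i); apply: leq_ltn_trans iD'; rewrite leq_add2r.
  have D'3 : 3 <= D'.
    case: D' D'0 iD' Hw {D'D} => [|[|[|D']]] //= _ iD' Hw.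
    - rewrite addn1 in Hw; have := Hadj i' ii'; rewrite -Hw Hirr; apply.
      by apply: ltn_trans iD'; rewrite addn1.
    - rewrite addn2 in Hw; have := Hnb i' ii'; rewrite -Hw eqxx; apply.
      by rewrite -addn2.
  have H1 : forall j, i' <= j -> j < i' + D' -> adj (w j) (w j.+1).
    move=> j ij jD; apply: Hadj; first exact: leq_trans ij.
    exact: ltn_trans iD'.
  have H2 : forall j, i' <= j -> j.+2 < i' + D' -> w j.+2 != w j.
    move=> j ij jD; apply: Hnb; first exact: leq_trans ij.
    exact: ltn_trans iD'.
  have [c [Hc Hsz]] := IH D' D'D i' D'3 H1 (esym Hw) H2.
  by exists c; split => //; apply: leq_trans Hsz (ltnW D'D).
move=> Hno.
exists (mkseq (fun u => w (i + u)) D); rewrite size_mkseq; split => //.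
split.
- by rewrite size_mkseq.
- apply/mkseq_uniqP => u v; rewrite !inE => uD vD Huv.
  wlog uv : u v uD vD Huv / u <= v.
    move=> H; case: (leqP u v) => [|/ltnW] le; first exact: H.
    by apply/esym/H.
  case: (ltngtP u v) uv => // uv _.
  exfalso; apply: Hno; exists (i + u), (v - u); split.
  + by rewrite subn_gt0.
  + exact: leq_addr.
  + by rewrite -addnA subnKC ?(ltnW uv) // ltn_add2l.
  + by rewrite -addnA subnKC ?(ltnW uv).
- rewrite (cycle_path (w i)); apply/(pathP (w i)) => u; rewrite size_mkseq => uD.
  have lastE : last (w i) (mkseq (fun u => w (i + u)) D) = w (i + D.-1).
    by rewrite -nth_last size_mkseq nth_mkseq // prednK // (leq_trans _ D3).
  rewrite lastE; case: u uD => [|u] uD /=.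
  + rewrite nth_mkseq // addn0 -Hcl -[in X in adj _ (w X)](prednK (leq_trans _ D3 : 0 < D)) //.
    rewrite addnS; apply: Hadj; first exact: leq_addr.
    by rewrite ltn_add2l prednK // (leq_trans _ D3).
  + rewrite !nth_mkseq ?(ltnW uD) // addnS; apply: Hadj; first exact: leq_addr.
    by rewrite ltn_add2l ltnW.
Qed.

Lemma shortcut (V : eqType) (adj : rel V) d (Hd : is_path_metric adj d)
  (f : nat -> V) L a b : fwalk adj f L -> a <= b -> b <= L -> f a = f b ->
  d (f 0) (f L) <= L - (b - a).
Proof.
move=> Hf ab bL Hab.
pose g i := if i < a then f i else f (i + (b - a)).
have g0 : g 0 = f 0.
  rewrite /g; case: ltnP => // a0; have a00 : a = 0 by lia.
  have -> : 0 + (b - a) = b by lia.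
  by rewrite -Hab a00.
have gL : g (L - (b - a)) = f L.
  by rewrite /g; case: ltnP => h; [exfalso; lia| congr f; lia].
rewrite -g0 -gL; apply: dle => // i iL; rewrite /g.
case: (ltnP i a) => ia; case: (ltnP i.+1 a) => ia'.
- by apply: Hf; lia.
- have -> : i.+1 + (b - a) = b by lia.
  rewrite -Hab (_ : a = i.+1); [apply: Hf; lia | lia].
- lia.
- rewrite addSn; apply: Hf; lia.
Qed.

Definition Cn (V : eqType) (c : seq V) (x0 : V) a := nth x0 c (a %% size c).

Lemma Cn_adj (V : eqType) (adj : rel V) (c : seq V) x0 :
  is_graph_cycle adj c -> forall a, adj (Cn c x0 a) (Cn c x0 a.+1).
Proof.
case=> n3 _ Hcy a; rewrite /Cn.
have n0 : 0 < size c by lia.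
have : path adj (last x0 c) c by rewrite -cycle_path.
move/(pathP x0) => Hp.
set r := a %% size c.
have rn : r < size c by rewrite ltn_pmod.
have -> : a.+1 %% size c = r.+1 %% size c by rewrite /r -[in RHS]addn1 modnDml addn1.
case: (ltnP r.+1 (size c)) => h.
- by rewrite modn_small //; have := Hp r.+1 h.
- have -> : r.+1 %% size c = 0.
    by rewrite (_ : r.+1 = size c) ?modnn //; lia.
  have := Hp 0 n0; rewrite /= -nth_last.
  by have -> : r = (size c).-1 by lia.
Qed.

Lemma Cn_inj (V : eqType) (adj : rel V) (c : seq V) x0 :
  is_graph_cycle adj c -> forall a t, 0 < t < size c ->
  Cn c x0 (a + t) != Cn c x0 a.
Proof.
case=> n3 Hu _ a t /andP[t0 tn]; rewrite /Cn.
have n0 : 0 < size c by lia.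
rewrite nth_uniq ?ltn_pmod //; apply/negP.
rewrite -{2}[a]addn0 eqn_modDl mod0n modn_small //; lia.
Qed.

Lemma Cn_fwd (V : eqType) (adj : rel V) d (Hd : is_path_metric adj d)
  (c : seq V) x0 : is_graph_cycle adj c -> forall a t,
  d (Cn c x0 a) (Cn c x0 (a + t)) <= t.
Proof.
move=> Hc a t; have := @dle _ _ _ Hd (fun i => Cn c x0 (a + i)) t.
rewrite addn0; apply=> i _; rewrite addnS; exact: Cn_adj.
Qed.

Lemma F4 (V : eqType) (adj : rel V) d (Hd : is_path_metric adj d)
  (Hs : symmetric adj) (Hirr : irreflexive adj) (c : seq V) x0
  (Hc : is_graph_cycle adj c) (Hev : ~~ odd (size c))
  (Hg : forall c', is_graph_cycle adj c' -> size c <= size c') :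
  forall t a, t.*2 <= size c -> t <= d (Cn c x0 a) (Cn c x0 (a + t)).
Proof.
have n4 : 4 <= size c.
  case: Hc => n3 _ _; move: Hev n3; case: (size c) => [|[|[|[|n]]]] //.
elim/ltn_ind => t IH a t2.
rewrite leqNgt; apply/negP => Hm.
set C := Cn c x0 in Hm IH *.
have [f [f0 fm fw]] := dex Hd (C a) (C (a + t)).
move: Hm f0 fm fw; set m := d (C a) (C (a + t)) => Hm f0 fm fw.
have t0 : 0 < t by lia.
have tn : t < size c by lia.
have m0 : 0 < m.
  case: (posnP m) => // m00; exfalso.
  have := @Cn_inj _ _ c x0 Hc a t ltac:(lia); rewrite -/C -f0 -fm m00 eqxx; by [].
have nb : forall j, j.+2 <= m -> f j.+2 != f j.
  move=> j jm; apply/negP => /eqP h.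
  have jj : j <= j.+2 by lia.
  have := shortcut Hd fw jj jm (esym h).
  rewrite f0 fm -/m; lia.
have junc : f m.-1 != C (a + (t - 1)).
  apply/negP => /eqP h.
  have := @dle _ _ _ Hd f m.-1; rewrite f0 h => H.
  have := H (fun i im => fw i (leq_trans im (leq_pred m))).
  have := IH (t - 1) ltac:(lia) a ltac:(lia); lia.
pose w j := if j < m then f j else C (a + t - (j - m)).
have wE1 : forall j, j < m -> w j = f j by move=> j h; rewrite /w h.
have wE2 : forall j, m <= j -> w j = C (a + t - (j - m)).
  by move=> j h; rewrite /w ltnNge h.
have Hadj : forall j, 0 <= j -> j < 0 + (m + t) -> adj (w j) (w j.+1).
  move=> j _ jD; case: (ltngtP j.+1 m) => h.
  - by rewrite !wE1 ?(ltnW h) //; apply: fw; lia.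
  - rewrite !wE2; try lia.
    rewrite (_ : a + t - (j - m) = (a + t - (j.+1 - m)).+1); last lia.
    rewrite Hs; exact: Cn_adj.
  - rewrite wE1; last lia. rewrite wE2; last lia.
    rewrite (_ : a + t - (j.+1 - m) = a + t); last lia.
    rewrite -fm -h; apply: fw; lia.
have Hcl : w (0 + (m + t)) = w 0.
  rewrite add0n wE2; last lia. rewrite wE1 //.
  by rewrite f0 (_ : a + t - (m + t - m) = a); last lia.
have Hnb : forall j, 0 <= j -> j.+2 < 0 + (m + t) -> w j.+2 != w j.
  move=> j _ jD; case: (ltngtP j.+2 m) => h.
  - by rewrite !wE1 ?(ltnW h) //; try lia; apply: nb; lia.
  - case: (ltnP j m) => h2.
    + rewrite (wE1 j) // (wE2 j.+2); last lia.
      rewrite (_ : a + t - (j.+2 - m) = a + (t - 1)); last lia.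
      rewrite eq_sym (_ : j = m.-1); last lia. exact: junc.
    + rewrite !wE2 //; try lia.
      rewrite (_ : a + t - (j - m) = (a + t - (j.+2 - m)) + 2); last lia.
      rewrite eq_sym; exact: (@Cn_inj _ _ c x0 Hc _ 2 ltac:(lia)).
  - rewrite (wE1 j); last lia. rewrite (wE2 j.+2); last lia.
    rewrite (_ : a + t - (j.+2 - m) = a + t); last lia.
    rewrite -fm; have := nb j ltac:(lia). by rewrite -h.
have [c' [Hc' Hsz]] := @extract _ _ w Hirr (m + t) 0 ltac:(lia) Hadj Hcl Hnb.
have := Hg c' Hc'; lia.
Qed.
Local Open Scope ring_scope.

Theorem mainTheorem7 (V : eqType) (adj : rel V) (d : V -> V -> nat)
  (Hsimple : simple_graph adj) (Hconn : connected_graph adj)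
  (Hd : is_path_metric adj d)
  (g : nat) (Hcyc : exists c, is_graph_cycle adj c /\ size c = g)
  (Hgirth : forall c, is_graph_cycle adj c -> (g <= size c)%N)
  (Heven : ~~ odd g) :
  ~ cond_strict_neg_def (fun x y => (d x y)%:R : CC).
Proof.
move=> Hneg.
case: Hsimple => Hs Hirr.
case: Hcyc => c [Hc Hsz]; subst g.
have n4 : (4 <= size c)%N.
  case: Hc => n3 _ _; move: Heven n3; case: (size c) => [|[|[|[|n]]]] //.
have [x0 _] : exists x0 : V, true.
  by case: c Hc {Hgirth Heven n4} => [[]//|x ?]; exists x.
set k := (size c)./2.
have hk : size c = (k + k)%N.
  by rewrite addnn /k -[in LHS](odd_double_half (size c)) (negbTE Heven).
have k2 : (2 <= k)%N by lia.
pose C := Cn c x0.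
have inj := @Cn_inj _ _ c x0 Hc.
have e10 : (C 1%N == C 0%N) = false.
  by apply/negbTE; have := inj 0%N 1%N ltac:(lia).
have e20 : (C k == C 0%N) = false.
  by apply/negbTE; have := inj 0%N k ltac:(lia).
have e30 : (C (k + 1)%N == C 0%N) = false.
  by apply/negbTE; have := inj 0%N (k + 1)%N ltac:(lia).
have e21 : (C k == C 1%N) = false.
  apply/negbTE; have := inj 1%N (k - 1)%N ltac:(lia).
  by rewrite (_ : (1 + (k - 1))%N = k) //; lia.
have e31 : (C (k + 1)%N == C 1%N) = false.
  apply/negbTE; have := inj 1%N k ltac:(lia).
  by rewrite addnC.
have e32 : (C (k + 1)%N == C k) = false.
  by apply/negbTE; have := inj k 1%N ltac:(lia).
pose v0 := C 0%N; pose v1 := C 1%N; pose v2 := C k; pose v3 := C (k + 1)%N.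
pose lam (v : V) : CC := if v == v0 then 1 else if v == v1 then -1
  else if v == v2 then 1 else if v == v3 then -1 else 0.
have L0 : lam v0 = 1 by rewrite /lam eqxx.
have L1 : lam v1 = -1 by rewrite /lam e10 eqxx.
have L2 : lam v2 = 1 by rewrite /lam e20 e21 eqxx.
have L3 : lam v3 = -1 by rewrite /lam e30 e31 e32 eqxx.
have Huniq : uniq [:: v0; v1; v2; v3].
  by rewrite /= !inE (eq_sym v0 v1) (eq_sym v0 v2) (eq_sym v0 v3)
    (eq_sym v1 v2) (eq_sym v1 v3) (eq_sym v2 v3) e10 e20 e30 e21 e31 e32.
have Hsupp : forall v, v \notin [:: v0; v1; v2; v3] -> lam v = 0.
  move=> v; rewrite !inE => /norP [/negbTE h0 /norP [/negbTE h1 /norP [/negbTE h2 /negbTE h3]]].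
  by rewrite /lam h0 h1 h2 h3.
have Hnz : exists v, lam v != 0 by exists v0; rewrite L0 oner_neq0.
have Hsum : \sum_(v <- [:: v0; v1; v2; v3]) lam v = 0.
  rewrite !big_cons big_nil L0 L1 L2 L3; ring.
have := Hneg [:: v0; v1; v2; v3] lam Huniq Hsupp Hnz Hsum.
rewrite !big_cons !big_nil L0 L1 L2 L3 conjC1 rmorphN1 !(dxx Hd).
rewrite (dsym Hd Hs v1 v0) (dsym Hd Hs v2 v0) (dsym Hd Hs v3 v0).
rewrite (dsym Hd Hs v2 v1) (dsym Hd Hs v3 v1) (dsym Hd Hs v3 v2).
set a01 := (d v0 v1)%:R; set a02 := (d v0 v2)%:R; set a03 := (d v0 v3)%:R.
set a12 := (d v1 v2)%:R; set a13 := (d v1 v3)%:R; set a23 := (d v2 v3)%:R.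
move=> H.
have b01 : (d v0 v1 <= 1)%N by have := @Cn_fwd _ _ _ Hd c x0 Hc 0%N 1%N.
have b23 : (d v2 v3 <= 1)%N by have := @Cn_fwd _ _ _ Hd c x0 Hc k 1%N; rewrite addn1 /v2 /v3 addn1.
have b12 : (d v1 v2 <= k - 1)%N.
  have := @Cn_fwd _ _ _ Hd c x0 Hc 1%N (k - 1)%N.
  by rewrite (_ : (1 + (k - 1))%N = k) //; lia.
have b03 : (d v0 v3 <= k - 1)%N.
  have := @Cn_fwd _ _ _ Hd c x0 Hc (k + 1)%N (k - 1)%N.
  rewrite (dsym Hd Hs v0 v3).
  have -> : Cn c x0 (k + 1 + (k - 1)) = v0.
    by rewrite /v0 /C /Cn (_ : (k + 1 + (k - 1))%N = size c) ?modnn ?mod0n //; lia.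
  by [].
have b02 : (k <= d v0 v2)%N.
  by have := @F4 _ _ _ Hd Hs Hirr c x0 Hc Heven Hgirth k 0%N ltac:(lia).
have b13 : (k <= d v1 v3)%N.
  have := @F4 _ _ _ Hd Hs Hirr c x0 Hc Heven Hgirth k 1%N ltac:(lia).
  by rewrite addnC.
have Hge : 0 <= 2 * (a02 + a13 - (a01 + a03 + a12 + a23)) :> CC.
  apply: mulr_ge0; first exact: ler0n.
  rewrite subr_ge0 /a01 /a02 /a03 /a12 /a13 /a23 -!natrD ler_nat; lia.
have fin : forall X : CC, X = 2 * (a02 + a13 - (a01 + a03 + a12 + a23)) -> X < 0 -> False.
  by move=> X -> hlt; have := le_lt_trans Hge hlt; rewrite ltxx.
apply: (fin _ _ H); ring.
Qed.
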